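(* If $K\subset\mathbb{X}$ is compact, then $\eta(K)=0$ if and only if $\lim_{\varepsilon\to0}\tau(B_\varepsilon(K))=0$.
   Context: $\mathbb{X}$ is a compact metric space. $(\xi_j)_{j\in\mathbb N}$ is a sequence of finitely additive outer probabilities on $\mathbb{X}$ (set functions on all subsets, values in $[0,1]$, finitely additive, $\xi_j(\mathbb{X})=1$). For $A\subset\mathbb{X}$, $\tau(A)=\limsup_{n\to\infty}\frac1n\sum_{j=0}^{n-1}\xi_j(A)$. For $Y\subset\mathbb{X}$ and $r>0$, $\nu_r(Y)=\inf\sum_{I\in\mathcal I}\tau(I)$ over all countable covers $\mathcal I$ of $Y$ by open sets of diameter at most $r$; $\nu(Y)=\sup_{r>0}\nu_r(Y)$; $\eta$ is the restriction of $\nu$ to the Borel $\sigma$-algebra (a countably additive Borel measure). $B_\varepsilon(K)$ is the open $\varepsilon$-neighborhood of $K$. *)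

(* Defs.v *)
From HB Require Import structures.
From mathcomp Require Import all_boot all_order all_algebra.
From mathcomp Require Import all_classical all_reals all_analysis.
Set Implicit Arguments. Unset Strict Implicit. Unset Printing Implicit Defensive.
Import Order.TTheory GRing.Theory Num.Theory.
Local Open Scope classical_set_scope.
Local Open Scope ring_scope.

Section defs.
Context {R : realType} {X : metricType R}.

Definition fa_outer_prob_seq (xi : nat -> set X -> R) : Prop :=
  (forall j A, 0 <= xi j A <= 1) /\
  (forall j, xi j setT = 1) /\
  (forall j A B, A `&` B = set0 -> xi j (A `|` B) = xi j A + xi j B).

Definition tau (xi : nat -> set X -> R) (A : set X) : \bar R :=
  limn_esup (fun n : nat => ((n%:R)^-1 * \sum_(j < n) xi j A)%:E).

Definition diam_le (A : set X) (r : R) : Prop :=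
  forall x y, A x -> A y -> mdist x y <= r.

(* nu_r(Y): infimum over countable covers of Y by open sets of diameter <= r
   (finite covers are included by padding with the empty set) *)
Definition nu_r (xi : nat -> set X -> R) (r : R) (Y : set X) : \bar R :=
  ereal_inf [set (\sum_(i <oo) tau xi (I i))%E | I in
    [set I : nat -> set X | (forall i, open (I i) /\ diam_le (I i) r) /\
                            Y `<=` \bigcup_i I i]].

Definition nu (xi : nat -> set X -> R) (Y : set X) : \bar R :=
  ereal_sup [set nu_r xi r Y | r in [set r : R | 0 < r]].

(* eta: restriction of nu to Borel sets; we only evaluate it on Borel sets *)
Definition eta_restr (xi : nat -> set X -> R) (A : set X) : \bar R := nu xi A.

Definition Beps (K : set X) (eps : R) : set X :=
  [set y | exists2 x, K x & mdist x y < eps].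
End defs.

(* Main.v *)
Require Import Defs.
From HB Require Import structures.
From mathcomp Require Import all_boot all_order all_algebra.
From mathcomp Require Import all_classical all_reals all_analysis.
From mathcomp Require Import lra.
Import Order.TTheory GRing.Theory Num.Theory.
Local Open Scope classical_set_scope.
Local Open Scope ring_scope.

Lemma xi0 (R : realType) (X : metricType R) (xi : nat -> set X -> R) j :
  fa_outer_prob_seq xi -> xi j set0 = 0.
Proof.
move=> [_ [_ Had]]; have := Had j set0 set0 (setI0 _).
rewrite setU0 => /eqP; rewrite -subr_eq0 opprD addrA subrr sub0r oppr_eq0.
by move/eqP.
Qed.

Lemma xi_ge0 (R : realType) (X : metricType R) (xi : nat -> set X -> R) j A :
  fa_outer_prob_seq xi -> 0 <= xi j A.
Proof. by move=> [H _]; have /andP[] := H j A. Qed.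

Lemma xi_le1 (R : realType) (X : metricType R) (xi : nat -> set X -> R) j A :
  fa_outer_prob_seq xi -> xi j A <= 1.
Proof. by move=> [H _]; have /andP[] := H j A. Qed.

Lemma xi_mono (R : realType) (X : metricType R) (xi : nat -> set X -> R) j A B :
  fa_outer_prob_seq xi -> A `<=` B -> xi j A <= xi j B.
Proof.
move=> H AB; have [_ [_ Had]] := H.
have -> : B = A `|` (B `\` A).
  by rewrite setDUK.
rewrite Had; first by rewrite lerDl xi_ge0.
by rewrite setDIK.
Qed.

Lemma xi_sub (R : realType) (X : metricType R) (xi : nat -> set X -> R) j A B :
  fa_outer_prob_seq xi -> xi j (A `|` B) <= xi j A + xi j B.
Proof.
move=> H; have [_ [_ Had]] := H.
have -> : A `|` B = A `|` (B `\` A).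
  apply/seteqP; split => x /=; last by case=> [?|[?]]; [left|right].
  by case=> [?|Bx]; [left|have [?|?] := pselect (A x); [left|right]].
rewrite Had; last by rewrite setDIK.
by rewrite lerD2l xi_mono.
Qed.

Local Open Scope ereal_scope.

Lemma esup_le_cst (R : realType) (u : (\bar R)^nat) c :
  (forall n, u n <= c) -> limn_esup u <= c.
Proof.
move=> uc; rewrite /limn_esup limf_esupE.
apply: le_trans (ereal_inf_lbound _) _.
  by exists setT => //; exact: filterT.
by apply: ge_ereal_sup => _ [n _ <-].
Qed.

Lemma esup_mono (R : realType) (u v : (\bar R)^nat) :
  (forall n, u n <= v n) -> limn_esup u <= limn_esup v.
Proof.
move=> uv; rewrite /limn_esup !limf_esupE.
apply: le_ereal_inf_tmp => _ [V FV <-].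
apply: le_trans (ereal_inf_lbound _) _; first by exists V.
by apply: ge_ereal_sup => _ [n Vn <-]; apply: le_trans (uv n) _; apply: ereal_sup_ubound; exists n.
Qed.

Lemma esup_ge0 (R : realType) (u : (\bar R)^nat) :
  (forall n, 0 <= u n) -> 0 <= limn_esup u.
Proof.
move=> u0; apply: limf_esup_ge0 => //.
Qed.

Lemma esup_sub (R : realType) (u v : (\bar R)^nat) :
  (forall n, 0 <= u n <= 1) -> (forall n, 0 <= v n <= 1) ->
  limn_esup (fun n => u n + v n) <= limn_esup u + limn_esup v.
Proof.
move=> u01 v01.
have Lu0 : 0 <= limn_esup u by apply: esup_ge0 => n; have /andP[] := u01 n.
have Lv0 : 0 <= limn_esup v by apply: esup_ge0 => n; have /andP[] := v01 n.
have Lu1 : limn_esup u <= 1 by apply: esup_le_cst => n; have /andP[] := u01 n.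
have Lv1 : limn_esup v <= 1 by apply: esup_le_cst => n; have /andP[] := v01 n.
have Luf : limn_esup u \is a fin_num by rewrite ge0_fin_numE// (le_lt_trans Lu1)// ltry.
have Lvf : limn_esup v \is a fin_num by rewrite ge0_fin_numE// (le_lt_trans Lv1)// ltry.
apply/lee_addgt0Pr => e e0.
have e20 : (0 < e / 2)%R by rewrite divr_gt0.
have /ereal_inf_lt[_ [V FV <-] HV] : limn_esup u < limn_esup u + (e/2)%:E.
  by rewrite lteDl // lte_fin.
have /ereal_inf_lt[_ [W FW <-] HW] : limn_esup v < limn_esup v + (e/2)%:E.
  by rewrite lteDl // lte_fin.
rewrite /limn_esup limf_esupE.
apply: le_trans (ereal_inf_lbound _) _.
  exists (V `&` W) => //; exact: filterI.
apply: ge_ereal_sup => _ [n [Vn Wn] <-].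
apply: le_trans (_ : ereal_sup (u @` V) + ereal_sup (v @` W) <= _).
  by apply: leeD; apply: ereal_sup_ubound; exists n.
apply: le_trans (leeD (ltW HV) (ltW HW)) _.
rewrite -/(limn_esup u) -/(limn_esup v).
by rewrite addeACA -EFinD -splitr.
Qed.
Lemma avg01 (R : realType) (X : metricType R) (xi : nat -> set X -> R) A n :
  fa_outer_prob_seq xi ->
  0 <= ((n%:R)^-1 * \sum_(j < n) xi j A)%:E <= 1.
Proof.
move=> H; rewrite !lee_fin; apply/andP; split.
  by rewrite mulr_ge0 ?invr_ge0// sumr_ge0// => j _; exact: xi_ge0.
case: n => [|n]; first by rewrite big_ord0 mulr0.
rewrite mulrC ler_pdivrMr ?ltr0Sn// mul1r.
apply: le_trans (_ : \sum_(j < n.+1) (1:R) <= _)%R.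
  by apply: ler_sum => j _; exact: xi_le1.
by rewrite sumr_const card_ord.
Qed.

Lemma tau01 (R : realType) (X : metricType R) (xi : nat -> set X -> R) A :
  fa_outer_prob_seq xi -> 0 <= tau xi A <= 1.
Proof.
move=> H; apply/andP; split.
  by apply: esup_ge0 => n; have /andP[] := @avg01 _ _ _ A n H.
by apply: esup_le_cst => n; have /andP[] := @avg01 _ _ _ A n H.
Qed.

Lemma tau_fin (R : realType) (X : metricType R) (xi : nat -> set X -> R) A :
  fa_outer_prob_seq xi -> tau xi A \is a fin_num.
Proof.
move=> H; have /andP[t0 t1] := @tau01 _ _ _ A H.
by rewrite ge0_fin_numE// (le_lt_trans t1)// ltry.
Qed.

Lemma tau_mono (R : realType) (X : metricType R) (xi : nat -> set X -> R) A B :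
  fa_outer_prob_seq xi -> A `<=` B -> tau xi A <= tau xi B.
Proof.
move=> H AB; apply: esup_mono => n; rewrite lee_fin.
rewrite ler_wpM2l ?invr_ge0// ler_sum// => j _; exact: xi_mono.
Qed.

Lemma tau_sub (R : realType) (X : metricType R) (xi : nat -> set X -> R) A B :
  fa_outer_prob_seq xi -> tau xi (A `|` B) <= tau xi A + tau xi B.
Proof.
move=> H.
apply: (le_trans _ (@esup_sub _ (fun n => ((n%:R)^-1 * \sum_(j < n) xi j A)%:E)
  (fun n => ((n%:R)^-1 * \sum_(j < n) xi j B)%:E)
  (fun n => @avg01 _ _ _ A n H) (fun n => @avg01 _ _ _ B n H))).
apply: esup_mono => n; rewrite -EFinD lee_fin -mulrDr -big_split /=.
rewrite ler_wpM2l ?invr_ge0// ler_sum// => j _; exact: xi_sub.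
Qed.

Lemma tau0 (R : realType) (X : metricType R) (xi : nat -> set X -> R) :
  fa_outer_prob_seq xi -> tau xi set0 = 0.
Proof.
move=> H; apply/eqP; rewrite eq_le; have /andP[-> _] := @tau01 _ _ _ set0 H.
rewrite andbT; apply: esup_le_cst => n.
by rewrite lee_fin big1 ?mulr0// => j _; exact: xi0.
Qed.

Lemma tau_bigcup (R : realType) (X : metricType R) (xi : nat -> set X -> R)
  (I : nat -> set X) N :
  fa_outer_prob_seq xi ->
  tau xi (\bigcup_(i < N) I i) <= \sum_(i < N) tau xi (I i).
Proof.
move=> H; rewrite bigcup_mkord; elim: N => [|N IH].
  by rewrite !big_ord0 tau0.
rewrite !big_ord_recr /=; apply: le_trans (@tau_sub _ _ _ _ _ H) _.
by apply: leeD.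
Qed.
Local Close Scope ereal_scope.

Lemma mdist_lt_trans (R : realType) (X : metricType R) (x y z : X) (a b : R) :
  mdist x y < a -> mdist y z < b -> mdist x z < a + b.
Proof.
move=> h1 h2; have h1' : ball x a y by rewrite ballEmdist.
have h2' : ball y b z by rewrite ballEmdist.
by have := ball_triangle h1' h2'; rewrite ballEmdist.
Qed.
Arguments mdist_lt_trans {R X x y z a b}.

Lemma mball_open (R : realType) (X : metricType R) (c : X) (e : R) :
  open [set y : X | mdist c y < e].
Proof.
rewrite openE => y /= cy; rewrite /interior /=; apply/nbhs_ballP.
exists ((e - mdist c y) / 2); first by apply: divr_gt0; rewrite // subr_gt0.
move=> z; rewrite ballEmdist /= => yz.
have h : mdist c y < mdist c y + (e - mdist c y) / 2.
  by rewrite ltrDl; apply: divr_gt0; rewrite // subr_gt0.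
have := mdist_lt_trans h yz.
by rewrite -addrA -splitr addrC subrK.
Qed.

Lemma Beps_open (R : realType) (X : metricType R) (K : set X) (e : R) :
  open (Beps K e).
Proof.
have -> : Beps K e = \bigcup_(x in K) [set y : X | mdist x y < e] by [].
by apply: bigcup_open => x _; exact: mball_open.
Qed.
Arguments tau_mono {R X xi A B}.
Arguments tau_fin {R X xi} A.
Arguments tau01 {R X xi} A.

Lemma msym (R : realType) (X : metricType R) (x y : X) : mdist x y = mdist y x.
Proof. exact: metric_sym. Qed.
Lemma mxx (R : realType) (X : metricType R) (x : X) : mdist x x = 0.
Proof. exact: mdistxx. Qed.

Lemma sum_cstE (R : realType) (d : R) m :
  (\sum_(0 <= k < m) d%:E)%R = (d *+ m)%:E.
Proof.
elim: m => [|m IH]; first by rewrite big_geq.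
by rewrite big_nat_recr//= IH -EFinD mulrS addrC.
Qed.
Lemma dir1 (R : realType) (X : metricType R) (xi : nat -> set X -> R) (K : set X) :
  fa_outer_prob_seq xi -> compact K -> nu xi K = 0%E ->
  (fun eps : R => tau xi (Beps K eps)) @ 0^'+ --> 0%E.
Proof.
move=> H cK nu0.
apply/fine_cvgP; split; first by apply: nearW => eps; exact: tau_fin.
apply/cvgrPdist_lt => e e0.
have nr : (nu_r xi 1 K <= 0)%E.
  rewrite -nu0 /nu; apply: ereal_sup_ubound => /=; exists 1 => //.
have e20 : 0 < e / 2 by apply: divr_gt0.
have /ereal_inf_lt[_ [I [HIo HcI] <-] Hs] : (nu_r xi 1 K < (e/2)%:E)%E.
  by apply: le_lt_trans nr _; rewrite lte_fin.
have : \forall N \near \oo, K `<=` \bigcup_(i < N) I i.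
  have /compact_near_coveringP cov := cK.
  apply: (cov nat \oo (fun N x => (\bigcup_(i < N) I i) x)) => // x Kx.
  have [i _ Iix] := HcI x Kx.
  exists (I i, [set N | (i < N)%N]) => /=.
    split; first by apply: open_nbhs_nbhs; split => //; case: (HIo i).
    by exists i.+1.
  by case=> x' N /= [Ix' iN]; exists i.
case=> N0 _ /(_ N0 (leqnn _)) KU.
set U := \bigcup_(i < N0) I i in KU.
have Uo : open U by apply: bigcup_open => i _; case: (HIo i).
have HBU : \forall eps \near 0^'+, Beps K eps `<=` U.
  have /compact_near_coveringP cov := cK.
  have := cov R (0^'+) (fun eps x => forall y, mdist x y < eps -> U y) _.
  move=> /(_ _) hh.
  have {}hh : \forall eps \near 0^'+, K `<=` (fun x => forall y, mdist x y < eps -> U y).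
    apply: hh => x Kx.
    have : nbhs x U by apply: open_nbhs_nbhs; split => //; exact: KU.
    move=> /nbhs_ballP[d /= d0 dU].
    have d20 : 0 < d / 2 by apply: divr_gt0.
    exists (ball x (d/2), [set eps | eps < d/2]) => /=.
      by split; [exact: nbhsx_ballx| exact: nbhs_right_lt].
    case=> x' eps /= [xx' epsd] y x'y.
    apply: dU; rewrite ballEmdist /=.
    move: xx'; rewrite ballEmdist /= => xx'.
    have := mdist_lt_trans xx' x'y.
    move=> /lt_le_trans; apply.
    by rewrite [leRHS]splitr lerD2l ltW.
  by move: hh; apply: filterS => eps hK y [x Kx xy]; exact: hK x Kx y xy.
move: HBU; apply: filterS => eps BU /=.
have t0 : (0 <= tau xi (Beps K eps))%E by have /andP[] := tau01 (Beps K eps) H.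
rewrite sub0r normrN ger0_norm ?fine_ge0//.
rewrite -lte_fin fineK ?tau_fin//.
apply: le_lt_trans (tau_mono H BU) _.
apply: le_lt_trans (@tau_bigcup _ _ _ I N0 H) _.
apply: le_lt_trans _ (lt_trans Hs _); last by rewrite lte_fin ltr_pdivrMr// ltr_pMr// ltr1n.
rewrite -(big_mkord xpredT (fun i => tau xi (I i))).
apply: nneseries_lim_ge => n _ _.
by have /andP[] := tau01 (I n) H.
Unshelve. all: by end_near.
Qed.
Lemma dir2 (R : realType) (X : metricType R) (xi : nat -> set X -> R) (K : set X) :
  fa_outer_prob_seq xi -> compact K ->
  (fun eps : R => tau xi (Beps K eps)) @ 0^'+ --> 0%E -> nu xi K = 0%E.
Proof.
move=> H cK cvg.
have nur_ge0 : forall r, (0 <= nu_r xi r K)%E.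
  move=> r; apply: le_ereal_inf_tmp => _ [I _ <-].
  by apply: nneseries_ge0 => n _ _; have /andP[] := tau01 (I n) H.
suff nur0 : forall r, 0 < r -> (nu_r xi r K <= 0)%E.
  apply/eqP; rewrite eq_le; apply/andP; split.
    by apply: ge_ereal_sup => _ [r r0 <-]; exact: nur0.
  apply: le_ereal_sup_tmp; exists (nu_r xi 1 K); last exact: nur_ge0.
  by exists 1 => //; rewrite /= ltr01.
move=> r r0.
have r30 : 0 < r / 3 by apply: divr_gt0.
pose F := filter_from [set: seq X] (fun s0 : seq X => [set s : seq X | {subset s0 <= s}]).
have FF : Filter F.
  apply: filter_from_filter; first by exists [::].
  move=> i j _ _; exists (i ++ j) => // t /= ht; split => z zi; apply: ht;
    by rewrite mem_cat zi ?orbT.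
have /compact_near_coveringP cov := cK.
have := cov (seq X) F (fun s x => exists2 c, c \in s & mdist c x < r / 3) FF.
case.
  move=> x Kx.
  exists (ball x (r/3), [set s : seq X | {subset [:: x] <= s}]) => /=.
    by split; [exact: nbhsx_ballx|exists [:: x]].
  case=> x' s' /= [xx' hs]; exists x; first by apply: hs; rewrite inE.
  by move: xx'; rewrite ballEmdist.
move=> s0 _ /(_ s0 (fun z (h : z \in s0) => h)) KD'.
set s := s0.
set n := size s.
apply/lee_addgt0Pr => e e0; rewrite add0e.
set d := e / n.+1%:R.
have d0 : 0 < d by apply: divr_gt0.
move/fine_cvgP: cvg => [_ /cvgrPdist_lt /(_ d d0) Hnear].
near (0:R)^'+ => eps.
have eps0 : 0 < eps by near: eps; exact: nbhs_right_gt.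
have Heps : `|0 - fine (tau xi (Beps K eps))| < d by near: eps.
have Hte : (tau xi (Beps K eps) <= d%:E)%E.
  move: Heps; rewrite sub0r normrN ger0_norm; last first.
    by apply: fine_ge0; have /andP[] := tau01 (Beps K eps) H.
  by rewrite -lte_fin fineK ?tau_fin// => /ltW.
pose J i := [set y | exists c, nth None (map Some s) i = Some c /\
                         mdist c y < r / 3 /\ Beps K eps y].
have JN : forall i, nth None (map Some s) i = None -> J i = set0.
  move=> i Ei; apply/seteqP; split => y //=.
  by case=> c [+ _]; rewrite Ei.
have JS : forall i c, nth None (map Some s) i = Some c ->
    J i = [set y | mdist c y < r / 3] `&` Beps K eps.
  move=> i c Ei; apply/seteqP; split => y /=.
    by case=> c' [+ [h1 h2]]; rewrite Ei => -[->]; split.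
  by case=> h1 h2; exists c; rewrite Ei.
apply: le_trans (_ : \sum_(i <oo) tau xi (J i) <= _)%E.
  apply: ereal_inf_lbound; exists J => //; split.
    move=> i; case Ei : (nth None (map Some s) i) => [c|].
      rewrite (JS i c Ei); split.
        by apply: openI; [exact: mball_open|exact: Beps_open].
      move=> x y [cx _] [cy _].

      move: cx cy => /= cx cy; rewrite msym in cx.
      apply/ltW; apply: lt_le_trans (mdist_lt_trans cx cy) _.
      lra.
    by rewrite (JN i Ei); split; [exact: open0|move=> x y].
  move=> x Kx.
  have [c cD cx] := KD' x Kx.
  have cs : Some c \in map Some s by rewrite (map_f Some cD).
  exists (index (Some c) (map Some s)) => //.
  exists c; split; first exact: nth_index.
  by split => //; exists x => //; rewrite mxx.
rewrite (nneseries_split 0 n); last by move=> k _; have /andP[] := tau01 (J k) H.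
rewrite eseries0 ?adde0; last first.
  move=> i ni _; rewrite JN ?tau0// nth_default// size_map; by rewrite add0n in ni.
apply: (@le_trans _ _ (\sum_(0 <= k < 0 + n) (d%:E))%E).
  apply: lee_sum => k _.
  case Ek : (nth None (map Some s) k) => [c|]; last by rewrite JN// tau0// lee_fin ltW.
  apply: le_trans Hte; apply: tau_mono H _; by rewrite (JS k c Ek) => y [].
rewrite add0n sum_cstE lee_fin -mulr_natr /d mulrAC ler_pdivrMr ?ltr0Sn//.
by rewrite ler_pM2l// ler_nat.
Unshelve. all: by end_near.
Qed.

Theorem mainTheorem10 (R : realType) (X : metricType R)
  (xi : nat -> set X -> R) (K : set X) :
  compact [set: X] ->
  fa_outer_prob_seq xi ->
  compact K ->
  (eta_restr xi K = 0%E <->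
   (fun eps : R => tau xi (Beps K eps)) @ 0^'+ --> 0%E).
Proof.
move=> _ H cK; split; first exact: dir1.
exact: dir2.
Qed.
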